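(* Assume $abcd\neq0$ and $\omega\in\partial B$. Then $\displaystyle\lim_{M\to\infty}\frac{\mathcal{E}_M(\omega)}{M}=\frac23$.
   Context: Setting: $C=\begin{bmatrix} a&b\\ c&d\end{bmatrix}$ a fixed $2\times2$ unitary matrix, $\Delta=\det C$, a fixed square root $\Delta^{1/2}$; for each $M\ge1$, $\Gamma_M=\{0,\dots,M-1\}$ and $E_M$ is the linear map on $\ell^2(\Gamma_M;\mathbb{C}^2)$ with $(E_M\varphi)(x)=P\varphi(x+1)+Q\varphi(x-1)$, $\varphi(-1)=\varphi(M)=0$, $P=\begin{bmatrix} a&b\\0&0\end{bmatrix}$, $Q=\begin{bmatrix}0&0\\c&d\end{bmatrix}$. For $\omega$ on the unit circle let $z=\Delta^{1/2}\omega$ and let $\varphi$ be the unique solution of $(z-E_M)\varphi=\delta_0|R\rangle$, where $|R\rangle=(0,1)^\top$; the energy is $\mathcal{E}_M(\omega)=\sum_{n=0}^{M-1}\|\varphi(n)\|^2_{\mathbb{C}^2}$. Let $x(\omega)=\frac{\omega+\omega^{-1}}{2|a|}$ and $\partial B=\{\omega:|\omega|=1,\ |x(\omega)|=1\}$. *)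

(* Defs.v *)
From HB Require Import structures.
From mathcomp Require Import all_boot all_order all_algebra.
From mathcomp Require Import complex.
From mathcomp Require Import all_classical all_reals all_analysis.
Set Implicit Arguments. Unset Strict Implicit. Unset Printing Implicit Defensive.
Import Order.TTheory GRing.Theory Num.Theory.
Local Open Scope ring_scope.

(* An element phi of l^2(Gamma_M; C^2) is encoded as a column vector of
   length 2*M: the component k corresponds to site x = k %/ 2 and spin
   index i = k %% 2  (i = 0 is |L>, i = 1 is |R>). *)

Section Walk.
Variable R : realType.
Local Notation C := (R[i]).

Definition unitary2 (U : 'M[C]_2) : Prop :=
  U *m (map_mx Num.conj U)^T = 1%:M.

Definition Pmx (U : 'M[C]_2) : 'M[C]_2 :=
  \matrix_(i, j) (if (i : nat) == 0%N then U i j else 0).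
Definition Qmx (U : 'M[C]_2) : 'M[C]_2 :=
  \matrix_(i, j) (if (i : nat) == 1%N then U i j else 0).

(* (E_M phi)(x) = P phi(x+1) + Q phi(x-1), with phi(-1) = phi(M) = 0 *)
Definition Emx (U : 'M[C]_2) (M : nat) : 'M[C]_(2 * M) :=
  \matrix_(k, l)
    (let x := (k %/ 2)%N in let y := (l %/ 2)%N in
     let i := inZp (k %% 2) : 'I_2 in let j := inZp (l %% 2) : 'I_2 in
     (if y == x.+1 then Pmx U i j else 0) +
     (if y.+1 == x then Qmx U i j else 0)).

(* delta_0 |R> : 1 at site 0, component R *)
Definition srcR (M : nat) : 'cV[C]_(2 * M) :=
  \col_k (if (k : nat) == 1%N then 1 else 0).

Definition solution (U : 'M[C]_2) (z : C) (M : nat) : 'cV[C]_(2 * M) :=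
  invmx (z%:M - Emx U M) *m srcR M.

(* energy  E_M(omega) = sum_n ||phi(n)||^2 , with z = s * omega, s^2 = det U *)
Definition energy (U : 'M[C]_2) (s omega : C) (M : nat) : R :=
  complex.Re (\sum_(k < 2 * M) `|solution U (s * omega) M k ord0| ^+ 2).

Definition xfun (U : 'M[C]_2) (omega : C) : C :=
  (omega + omega^-1) / (2 * `|U 0 0|).

End Walk.

(* Main.v *)
Require Import Defs.
Set Warnings "-notation-overridden,-ambiguous-paths,-notation-incompatible-prefix".
From HB Require Import structures.
From mathcomp Require Import all_boot all_order all_algebra.
From mathcomp Require Import complex.
From mathcomp Require Import all_classical all_reals all_analysis.
From mathcomp Require Import ring lra zify.
Set Implicit Arguments. Unset Strict Implicit. Unset Printing Implicit Defensive.
Import Order.TTheory GRing.Theory Num.Theory.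
Import numFieldNormedType.Exports.
Local Open Scope classical_set_scope.
Local Open Scope ring_scope.
Section A.
Variable R : realType.
Local Notation C := (R[i]).

Lemma l01 : lift ord0 ord0 = 1 :> 'I_2. Proof. exact: val_inj. Qed.
Lemma l01' : lift (0 : 'I_2) 0 = 1 :> 'I_2. Proof. exact: val_inj. Qed.

Lemma det22 (U : 'M[C]_2) : \det U = U 0 0 * U 1 1 - U 0 1 * U 1 0.
Proof.
rewrite (expand_det_row _ 0) !big_ord_recl big_ord0 addr0 /cofactor /=.
rewrite !det_mx11 /= !mxE /=.
have E1 : lift (0 : 'I_2) (0 : 'I_1) = 1 by exact: val_inj.
have E2 : lift (0 : 'I_2) (0 : 'I_1) = 1 by exact: val_inj.
have E3 : lift (lift (0 : 'I_2) (0 : 'I_1)) (0 : 'I_1) = 0 by exact: val_inj.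
rewrite ?E3 ?E1 /= ?expr0 ?expr1.
ring.
Qed.

Lemma unitary_facts (U : 'M[C]_2) : unitary2 U ->
  [/\ U 1 1 = \det U * (U 0 0)^*, U 1 0 = - (\det U * (U 0 1)^*) & \det U * (\det U)^* = 1].
Proof.
rewrite det22 /unitary2 => H.
have e i j : (U *m (map_mx Num.conj U)^T) i j = (1%:M : 'M[C]_2) i j by rewrite H.
have e00 := e 0 0; have e01 := e 0 1; have e10 := e 1 0; have e11 := e 1 1.
move: e00 e01 e10 e11; rewrite !mxE !big_ord_recl !big_ord0 !mxE /= !addr0 !l01.
set a := U 0 0; set b := U 0 1; set c := U 1 0; set d := U 1 1.
move=> e00 e01 e10 e11.
have hd : d = (a * d - b * c) * a^*.
  have -> : (a * d - b * c) * a^* = d * (a * a^*) - b * (c * a^*) by ring.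
  rewrite (_ : c * a^* = - (d * b^*)); last by apply/eqP; rewrite -addr_eq0 e10.
  have -> : d * (a * a^*) - b * - (d * b^*) = d * (a * a^* + b * b^*) by ring.
  by rewrite e00 mulr1.
have hc : c = - ((a * d - b * c) * b^*).
  have -> : (a * d - b * c) * b^* = a * (d * b^*) - c * (b * b^*) by ring.
  rewrite (_ : d * b^* = - (c * a^*)); last by apply/eqP; rewrite -addr_eq0 addrC e10.
  have -> : a * - (c * a^*) - c * (b * b^*) = - (c * (a * a^* + b * b^*)) by ring.
  by rewrite e00 mulr1 opprK.
split => //.
set D := a * d - b * c in hd hc *.
move: e11; rewrite hd hc.
rewrite !rmorphN !rmorphM /= !conjCK.
have -> : - (D * b^*) * - (D^* * b) + D * a^* * (D^* * a) = D * D^* * (a * a^* + b * b^*) by ring.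
by rewrite e00 mulr1.
Qed.
End A.
Section B.
Variable R : realType.
Local Notation C := (R[i]).
Variable U : 'M[C]_2.

Definition getv M (psi : 'cV[C]_(2*M)) (x i : nat) : C :=
  match (insub (2*x+i)%N : option 'I_(2*M)) with Some k => psi k 0 | None => 0 end.

Definition mkv M (f : nat -> nat -> C) : 'cV[C]_(2*M) := \col_(k < 2 * M) f (k %/ 2)%N (k %% 2)%N.

Lemma divmod2 (k : nat) : (2 * (k %/ 2) + k %% 2)%N = k.
Proof. by rewrite mulnC -divn_eq. Qed.

Lemma div2E x i : (i < 2)%N -> ((2 * x + i) %/ 2 = x)%N.
Proof. by move=> hi; rewrite mulnC divnMDl // divn_small // addn0. Qed.

Lemma mod2E x i : (i < 2)%N -> ((2 * x + i) %% 2 = i)%N.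
Proof. by move=> hi; rewrite mulnC modnMDl modn_small. Qed.

Lemma getv_ord M (psi : 'cV[C]_(2*M)) (k : 'I_(2*M)) : getv psi (k %/ 2) (k %% 2) = psi k 0.
Proof. by rewrite /getv divmod2 valK. Qed.

Lemma getv_mkv M f x i : (x < M)%N -> (i < 2)%N -> getv (mkv M f) x i = f x i.
Proof.
move=> hx hi; have h : (2 * x + i < 2 * M)%N by lia.
rewrite /getv; case: insubP => [k _ hk|]; last by rewrite h.
by rewrite mxE hk div2E // mod2E.
Qed.

Lemma sum_split M (F : nat -> nat -> C) :
  \sum_(k < 2 * M) F (k %/ 2)%N (k %% 2)%N = \sum_(x < M) (F x 0%N + F x 1%N).
Proof.
rewrite -(big_mkord xpredT (fun k => F (k %/ 2)%N (k %% 2)%N)).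
elim: M => [|M IH]; first by rewrite muln0 big_geq // big_ord0.
rewrite mulnSr addn2 !big_nat_recr //= IH big_ord_recr /= -addrA.
have h0 := div2E M (isT : (0 < 2)%N); have h1 := div2E M (isT : (1 < 2)%N).
have m0 := mod2E M (isT : (0 < 2)%N); have m1 := mod2E M (isT : (1 < 2)%N).
rewrite addn0 in h0 m0; rewrite addn1 in h1 m1.
by rewrite h0 m0 h1 m1.
Qed.

Lemma sum_ind M t (H : nat -> C) :
  \sum_(y < M) (if (y : nat) == t then H y else 0) = if (t < M)%N then H t else 0.
Proof.
elim: M => [|M IH]; first by rewrite big_ord0.
rewrite big_ord_recr /= IH.
case: (ltngtP t M) => [h|h|->] /=; rewrite ?addr0 ?add0r ?ltnS ?leqnn //.
- by rewrite ltnW.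
- by rewrite leqNgt h.
Qed.

Lemma sum_indS M t (H : nat -> C) :
  \sum_(y < M) (if (y : nat).+1 == t then H y else 0) =
  if (0 < t)%N && (t.-1 < M)%N then H t.-1 else 0.
Proof.
case: t => [|t] /=.
  by rewrite big1.
by under eq_bigr => y _ do rewrite eqSS; rewrite sum_ind.
Qed.

End B.
Section Bb.
Variable R : realType.
Local Notation C := (R[i]).
Variable U : 'M[C]_2.

Lemma inZp0 : inZp 0 = 0 :> 'I_2. Proof. exact: val_inj. Qed.
Lemma inZp1 : inZp 1 = 1 :> 'I_2. Proof. exact: val_inj. Qed.

Lemma Erow M (psi : 'cV[C]_(2*M)) (k : 'I_(2*M)) :
  (Emx U M *m psi) k 0 =
  if (k %% 2 == 0)%N then
    (if ((k %/ 2).+1 < M)%N then U 0 0 * getv psi (k %/ 2).+1 0 + U 0 1 * getv psi (k %/ 2).+1 1 else 0)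
  else (if (0 < k %/ 2)%N then U 1 0 * getv psi (k %/ 2).-1 0 + U 1 1 * getv psi (k %/ 2).-1 1 else 0).
Proof.
set x := (k %/ 2)%N; set i := (k %% 2)%N.
pose G := fun y j : nat => ((if y == x.+1 then Pmx U (inZp i) (inZp j) else 0) +
   (if y.+1 == x then Qmx U (inZp i) (inZp j) else 0)) * getv psi y j.
rewrite mxE; transitivity (\sum_(l < 2*M) G (l %/ 2)%N (l %% 2)%N).
  by apply: eq_bigr => l _; rewrite mxE -getv_ord.
rewrite sum_split.
transitivity (\sum_(y < M) ((if (y : nat) == x.+1 then Pmx U (inZp i) 0 * getv psi y 0 + Pmx U (inZp i) 1 * getv psi y 1 else 0)
  + (if (y : nat).+1 == x then Qmx U (inZp i) 0 * getv psi y 0 + Qmx U (inZp i) 1 * getv psi y 1 else 0))).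
  apply: eq_bigr => y _; rewrite /G inZp0 inZp1.
  by case: (_ == _); case: (_ == _); rewrite ?mul0r ?add0r ?addr0 ?mulrDl //; ring.
rewrite big_split /=.
rewrite (sum_ind M x.+1 (fun y => Pmx U (inZp i) 0 * getv psi y 0 + Pmx U (inZp i) 1 * getv psi y 1)).
rewrite (sum_indS M x (fun y => Qmx U (inZp i) 0 * getv psi y 0 + Qmx U (inZp i) 1 * getv psi y 1)).
clear G.
have : (i < 2)%N by rewrite ltn_mod.
case: i => [|[|//]] _ /=; rewrite ?inZp0 ?inZp1 !mxE /=.
  by rewrite !mul0r addr0 if_same addr0.
have hx : (x < M)%N by rewrite /x ltn_divLR //; have := ltn_ord k; lia.
have -> : (x.-1 < M)%N by rewrite (leq_ltn_trans (leq_pred x) hx).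
by rewrite !mul0r addr0 andbT if_same add0r.
Qed.

End Bb.
Section Bc.
Variable R : realType.
Local Notation C := (R[i]).
Variable U : 'M[C]_2.

Lemma ord_bnd M x i : (x < M)%N -> (i < 2)%N -> (2 * x + i < 2 * M)%N.
Proof. lia. Qed.

Lemma entry_eq M z (psi : 'cV[C]_(2*M)) x i (hx : (x < M)%N) (hi : (i < 2)%N) :
  let k := Ordinal (ord_bnd hx hi) in
  ((z%:M - Emx U M) *m psi) k 0 =
  z * getv psi x i -
  if (i == 0)%N then
    (if (x.+1 < M)%N then U 0 0 * getv psi x.+1 0 + U 0 1 * getv psi x.+1 1 else 0)
  else (if (0 < x)%N then U 1 0 * getv psi x.-1 0 + U 1 1 * getv psi x.-1 1 else 0).
Proof.
move=> k; rewrite mulmxBl mxE mul_scalar_mx.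
have -> : (- (Emx U M *m psi)) k 0 = - (Emx U M *m psi) k 0 by rewrite mxE.
have -> : (z *: psi) k 0 = z * psi k 0 by rewrite mxE.
rewrite Erow.
have hk1 : (k %/ 2 = x)%N by rewrite /= div2E.
have hk2 : (k %% 2 = i)%N by rewrite /= mod2E.
by rewrite -getv_ord hk1 hk2.
Qed.
End Bc.
Section Bd.
Variable R : realType.
Local Notation C := (R[i]).
Variable U : 'M[C]_2.

Lemma solve_mkv M z f :
  (forall x, (x < M)%N -> z * f x 0%N - (if (x.+1 < M)%N then U 0 0 * f x.+1 0%N + U 0 1 * f x.+1 1%N else 0) = 0) ->
  (forall x, (x < M)%N -> z * f x 1%N - (if (0 < x)%N then U 1 0 * f x.-1 0%N + U 1 1 * f x.-1 1%N else 0) = if x == 0%N then 1 else 0) ->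
  (z%:M - Emx U M) *m mkv M f = srcR R M.
Proof.
move=> h0 h1; apply/matrixP => k j; rewrite ord1.
case: k => k hk.
move: (k %/ 2)%N (k %% 2)%N (divmod2 k) (ltn_mod k 2) => x i e; rewrite -{}e in hk * => hi.
have hx : (x < M)%N by lia.
have -> : Ordinal hk = Ordinal (ord_bnd hx hi) by apply: val_inj.
rewrite entry_eq getv_mkv // mxE /=.
have hx1 : (x.-1 < M)%N by lia.
case: i hi hk => [|[|//]] hi hk /=.
  have -> : (2 * x + 0 == 1)%N = false by lia.
  have -> : (if (x.+1 < M)%N then U 0 0 * getv (mkv M f) x.+1 0 + U 0 1 * getv (mkv M f) x.+1 1 else 0) = (if (x.+1 < M)%N then U 0 0 * f x.+1 0%N + U 0 1 * f x.+1 1%N else 0).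
    by case: ifP => // h; rewrite !getv_mkv.
  exact: h0.
have -> : (2 * x + 1 == 1)%N = (x == 0)%N by lia.
have -> : (if (0 < x)%N then U 1 0 * getv (mkv M f) x.-1 0 + U 1 1 * getv (mkv M f) x.-1 1 else 0) = (if (0 < x)%N then U 1 0 * f x.-1 0%N + U 1 1 * f x.-1 1%N else 0).
  by case: ifP => // h; rewrite !getv_mkv.
exact: h1.
Qed.

Lemma kernel_rel M z (psi : 'cV[C]_(2*M)) : (z%:M - Emx U M) *m psi = 0 ->
  (forall x, (x < M)%N -> z * getv psi x 0 = (if (x.+1 < M)%N then U 0 0 * getv psi x.+1 0 + U 0 1 * getv psi x.+1 1 else 0)) /\
  (forall x, (x < M)%N -> z * getv psi x 1 = (if (0 < x)%N then U 1 0 * getv psi x.-1 0 + U 1 1 * getv psi x.-1 1 else 0)).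
Proof.
move=> h; split => x hx.
  have := entry_eq U z psi hx (isT : (0 < 2)%N) => /=; rewrite h => /esym; rewrite mxE => /eqP.
  by rewrite subr_eq0 => /eqP.
have := entry_eq U z psi hx (isT : (1 < 2)%N) => /=; rewrite h => /esym; rewrite mxE => /eqP.
by rewrite subr_eq0 => /eqP.
Qed.

Lemma getv_zero M (psi : 'cV[C]_(2*M)) : (forall x i, (x < M)%N -> (i < 2)%N -> getv psi x i = 0) -> psi = 0.
Proof.
move=> h; apply/matrixP => k j; rewrite ord1 mxE -getv_ord h //.
  by rewrite ltn_divLR //; have := ltn_ord k; lia.
by rewrite ltn_mod.
Qed.

Lemma unit_of_ker n (A : 'M[C]_n) : (forall v : 'cV_n, A *m v = 0 -> v = 0) -> A \in unitmx.
Proof.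
move=> h; rewrite -unitmx_tr -row_free_unit; apply: inj_row_free => v hv.
have : A *m v^T = 0 by rewrite -[A]trmxK -trmx_mul hv trmx0.
by move/h => /(congr1 trmx); rewrite trmxK trmx0.
Qed.

End Bd.
Section Alg.
Variable F : fieldType.

Definition Lsol (b z lam w : F) (N x : nat) :=
  lam ^+ x.+1 * b * (N - x)%:R / (z * (z + N%:R * w)).
Definition Rsol (z lam w : F) (N x : nat) :=
  lam ^+ x * (z + (N - x)%:R * w) / (z * (z + N%:R * w)).

Lemma verif0 (a b z lam w : F) N x : w = z - lam * a ->
  z != 0 -> z + N%:R * w != 0 -> (x < N.+1)%N ->
  z * Lsol b z lam w N x - (if (x.+1 < N.+1)%N then a * Lsol b z lam w N x.+1 + b * Rsol z lam w N x.+1 else 0) = 0.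
Proof.
move=> hw hz hE hx; rewrite /Lsol /Rsol; case: ifP => h.
  have -> : (N - x = (N - x.+1).+1)%N by lia.
  rewrite mulrSr !exprS hw; field.
  by rewrite -hw hE hz.
have -> : (N - x = 0)%N by move/negbT: h; lia.
by rewrite mulr0 mul0r mulr0 subr0.
Qed.

Lemma verif1 (a b c d z lam w : F) N x : w = z - lam * a ->
  d = lam ^+ 2 * a -> c * b = w ^+ 2 ->
  z != 0 -> z + N%:R * w != 0 -> (x < N.+1)%N ->
  z * Rsol z lam w N x - (if (0 < x)%N then c * Lsol b z lam w N x.-1 + d * Rsol z lam w N x.-1 else 0)
   = if x == 0%N then 1 else 0.
Proof.
move=> hw hd hcb hz hE hx; rewrite /Lsol /Rsol; case: x hx => [|x] hx /=.
  by rewrite subn0 expr0 mul1r subr0 mulrA divff // mulf_neq0.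
have -> : (N - x = (N - x.+1).+1)%N by lia.
have -> : c * (lam ^+ x.+1 * b * (N - x.+1).+1%:R / (z * (z + N%:R * w)))
   = (c * b) * (lam ^+ x.+1 * (N - x.+1).+1%:R / (z * (z + N%:R * w))) by ring.
rewrite hcb hd mulrSr !exprS hw; field.
by rewrite -hw hE hz.
Qed.

Definition hL (z lam w : F) (n : nat) := lam ^+ n * (z + n%:R * w) / z.
Definition hR (b z lam w : F) (n : nat) := lam ^+ n * n%:R * w ^+ 2 / (lam * z * b).

Lemma hstepR (a b c d z lam w : F) n : w = z - lam * a ->
  d = lam ^+ 2 * a -> c * b = w ^+ 2 -> z != 0 -> lam != 0 -> b != 0 ->
  z^-1 * (c * hL z lam w n + d * hR b z lam w n) = hR b z lam w n.+1.
Proof.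
move=> hw hd hcb hz hl hb; rewrite /hL /hR.
have -> : c = w ^+ 2 / b by rewrite -hcb mulfK.
rewrite hd !exprS mulrSr hw; field.
by rewrite hb hz hl ?ha.
Qed.

Lemma hstepL (a b z lam w : F) n : w = z - lam * a ->
  z != 0 -> lam != 0 -> b != 0 -> a != 0 ->
  a^-1 * (z * hL z lam w n - b * hR b z lam w n.+1) = hL z lam w n.+1.
Proof.
move=> hw hz hl hb ha; rewrite /hL /hR.
rewrite !exprS mulrSr hw; field.
by rewrite hb hz hl ?ha.
Qed.

End Alg.
Section Sol.
Variable R : realType.
Local Notation C := (R[i]).

Lemma solution_eq (U : 'M[C]_2) (z lam w : C) N :
  w = z - lam * U 0 0 -> U 1 1 = lam ^+ 2 * U 0 0 -> U 1 0 * U 0 1 = w ^+ 2 ->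
  z != 0 -> lam != 0 -> U 0 1 != 0 -> U 0 0 != 0 -> z + N%:R * w != 0 ->
  solution U z N.+1 = mkv N.+1 (fun x i => if i == 0%N then Lsol (U 0 1) z lam w N x else Rsol z lam w N x).
Proof.
move=> hw hd hcb hz hl hb ha hE.
set f := (fun x i => _).
have hA : (z%:M - Emx U N.+1) *m mkv N.+1 f = srcR R N.+1.
  apply: solve_mkv => x hx; rewrite /f /=.
    exact: (@verif0 _ (U 0 0) (U 0 1) z lam w N x hw hz hE hx).
  exact: (@verif1 _ (U 0 0) (U 0 1) (U 1 0) (U 1 1) z lam w N x hw hd hcb hz hE hx).
have hu : (z%:M - Emx U N.+1) \in unitmx.
  apply: unit_of_ker => v hv.
  have [r0 r1] := kernel_rel hv.
  set L0 := getv v 0 0.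
  have key : forall n, (n < N.+1)%N -> getv v n 0 = L0 * hL z lam w n /\ getv v n 1 = L0 * hR (U 0 1) z lam w n.
    elim => [|n IH] hn.
      split; first by rewrite /hL expr0 mul0r addr0 mul1r divff // mulr1.
      have := r1 0%N hn; rewrite /= => /eqP; rewrite mulf_eq0 (negbTE hz) /= => /eqP ->.
      by rewrite /hR mulr0 mul0r mul0r mulr0.
    have hn' : (n < N.+1)%N by lia.
    have [e0 e1] := IH hn'.
    have g1 : getv v n.+1 1 = L0 * hR (U 0 1) z lam w n.+1.
      rewrite -(hstepR n hw hd hcb hz hl hb).
      have := r1 n.+1 hn; rewrite /= => h.
      rewrite -[getv v n.+1 1](mulKf hz) h e0 e1; ring.
    split => //.
    rewrite -(hstepL n hw hz hl hb ha).
    have := r0 n hn'; rewrite hn => h.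
    rewrite -[getv v n.+1 0](mulKf ha).
    have -> : U 0 0 * getv v n.+1 0 = z * getv v n 0 - U 0 1 * getv v n.+1 1 by rewrite h; ring.
    rewrite e0 g1; ring.
  have hL0 : L0 = 0.
    have := r0 N (ltnSn N); rewrite ltnn => /eqP; rewrite mulf_eq0 (negbTE hz) /= => /eqP.
    rewrite (key N (ltnSn N)).1 => /eqP; rewrite mulf_eq0 => /orP [/eqP //|].
    rewrite /hL !mulf_eq0 expf_eq0 invr_eq0 (negbTE hz) (negbTE hE) (negbTE hl) andbF //.
  apply: getv_zero => x i hx hi.
  have [e0 e1] := key x hx.
  by case: i hi => [|[|//]] _; rewrite ?e0 ?e1 hL0 mul0r.
by rewrite /solution -hA mulKmx.
Qed.
End Sol.
Section Norm.
Variable F : fieldType.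

Lemma abs_id (lam lamc b bc z zc w wc : F) (N x m : nat) :
  lam * lamc = 1 -> z * zc = 1 -> b * bc = w * wc -> b != 0 ->
  z + N%:R * w != 0 -> zc + N%:R * wc != 0 ->
  (lam ^+ x.+1 * b * m%:R / (z * (z + N%:R * w))) * (lamc ^+ x.+1 * bc * m%:R / (zc * (zc + N%:R * wc)))
  + (lam ^+ x * (z + m%:R * w) / (z * (z + N%:R * w))) * (lamc ^+ x * (zc + m%:R * wc) / (zc * (zc + N%:R * wc)))
  = (2 * (w * wc) * m%:R ^+ 2 + m%:R * (z * wc + zc * w) + 1) / ((z + N%:R * w) * (zc + N%:R * wc)).
Proof.
move=> hl hz hb hb0 hE hEc.
have hl0 : lam != 0 by apply/negP => /eqP h; move: hl; rewrite h mul0r => /eqP; rewrite eq_sym oner_eq0.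
have hz0 : z != 0 by apply/negP => /eqP h; move: hz; rewrite h mul0r => /eqP; rewrite eq_sym oner_eq0.
have -> : lamc = lam^-1 by rewrite -[lamc]mul1r -(mulVf hl0) -mulrA hl mulr1.
have -> : zc = z^-1 by rewrite -[zc]mul1r -(mulVf hz0) -mulrA hz mulr1.
have -> : bc = w * wc / b by rewrite -hb mulrC mulKf.
rewrite !exprVn.
have hx : lam ^+ x != 0 by rewrite expf_neq0.
rewrite !exprS.
field.
have -> : 1 + N%:R * wc * z = z * (zc + N%:R * wc) by rewrite mulrDr hz; ring.
by rewrite hz0 mulf_neq0 // hE hx hb0 hl0.
Qed.
End Norm.
Section Norm2.
Variable R : realType.
Local Notation C := (R[i]).

Lemma norm1_conj (u : C) : `|u| = 1 -> u * u^* = 1.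
Proof. by move=> h; rewrite -normCK h expr1n. Qed.

Lemma term_eq (b z lam w : C) N x (W rho : R) :
  `|lam| = 1 -> `|z| = 1 -> `|b| = `|w| -> b != 0 -> z + N%:R * w != 0 ->
  (W%:C)%C = w * w^* -> (rho%:C)%C = 'Re (z * w^*) ->
  `|Lsol b z lam w N x| ^+ 2 + `|Rsol z lam w N x| ^+ 2 =
  (((2 * W * (N - x)%:R ^+ 2 + 2 * rho * (N - x)%:R + 1) / (1 + 2 * rho * N%:R + W * N%:R ^+ 2))%:C)%C.
Proof.
move=> hl hz hb hb0 hE hW hrho.
have hll := norm1_conj hl; have hzz := norm1_conj hz.
have hbb : b * b^* = w * w^* by rewrite -!normCK hb.
have hEc : z^* + N%:R * w^* != 0.
  by move: hE; apply: contra => /eqP h; rewrite -conjC_eq0 rmorphD rmorphM rmorph_nat h.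
rewrite !normCK /Lsol /Rsol !(rmorphM, fmorphV, rmorphXn, rmorphD, rmorph_nat) /=.
rewrite (abs_id x (N - x) hll hzz hbb hb0 hE hEc).
rewrite !rmorph1 hW hrho ReE rmorphM /= conjCK.
have h2 : (2 : C) != 0 by rewrite pnatr_eq0.
congr (_ / _).
  by rewrite mulr2n; field.
have hz0 : z != 0 by apply/negP => /eqP h; move: hzz; rewrite h mul0r => /eqP; rewrite eq_sym oner_eq0.
have -> : z^* = z^-1 by rewrite -[z^*]mul1r -(mulVf hz0) -mulrA hzz mulr1.
by field.
Qed.
End Norm2.
Section En.
Variable R : realType.
Local Notation C := (R[i]).

Definition Gt (W rho : R) (N m : nat) : R :=
  (2 * W * m%:R ^+ 2 + 2 * rho * m%:R + 1) / (1 + 2 * rho * N%:R + W * N%:R ^+ 2).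

Lemma mkv_norm_sum M (f : nat -> nat -> C) :
  \sum_(k < 2 * M) `|mkv M f k 0| ^+ 2 = \sum_(x < M) (`|f x 0%N| ^+ 2 + `|f x 1%N| ^+ 2).
Proof.
rewrite -(sum_split M (fun x i => `|f x i| ^+ 2)); apply: eq_bigr => k _.
by rewrite mxE.
Qed.

Lemma energy_eq (U : 'M[C]_2) (s om lam w : C) N (W rho : R) :
  let z := s * om in
  w = z - lam * U 0 0 -> U 1 1 = lam ^+ 2 * U 0 0 -> U 1 0 * U 0 1 = w ^+ 2 ->
  lam != 0 -> U 0 1 != 0 -> U 0 0 != 0 -> z + N%:R * w != 0 ->
  `|lam| = 1 -> `|z| = 1 -> `|U 0 1| = `|w| ->
  (W%:C)%C = w * w^* -> (rho%:C)%C = 'Re (z * w^*) ->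
  energy U s om N.+1 = \sum_(m < N.+1) Gt W rho N m.
Proof.
move=> z hw hd hcb hl hb ha hE hnl hnz hnb hW hrho.
have hz : z != 0 by rewrite -normr_eq0 hnz oner_eq0.
rewrite /energy (solution_eq hw hd hcb hz hl hb ha hE).
rewrite mkv_norm_sum /=.
under eq_bigr => x _ do rewrite (term_eq x hnl hnz hnb hb hE hW hrho).
rewrite -rmorph_sum /=.
rewrite (reindex_inj rev_ord_inj) /=.
apply: eq_bigr => x _; rewrite /Gt.
by have -> : (N - (N.+1 - x.+1) = x)%N by have := ltn_ord x; lia.
Qed.

Lemma sum_closed (W rho : R) N :
  \sum_(m < N.+1) (2 * W * m%:R ^+ 2 + 2 * rho * m%:R + 1) =
  N.+1%:R * (W * N%:R * (2 * N%:R + 1) / 3 + rho * N%:R + 1).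
Proof.
elim: N => [|N IH].
  by rewrite big_ord1 /=; field; rewrite ?pnatr_eq0.
rewrite big_ord_recr /= IH !mulrS.
by field; rewrite ?pnatr_eq0.
Qed.

End En.
Section Lim.
Variable R : realType.

Definition gfun (W rho : R) (N : nat) : R :=
  (W * N%:R * (2 * N%:R + 1) / 3 + rho * N%:R + 1) / (1 + 2 * rho * N%:R + W * N%:R ^+ 2).

Lemma lim_g (W rho : R) : 0 < W -> (fun n => gfun W rho n.+1) @ \oo --> (2 / 3 : R).
Proof.
move=> W0.
have hW : W != 0 by rewrite gt_eqF.
pose h := fun n : nat => (n.+1%:R : R)^-1.
have h0 : h @ \oo --> (0 : R) by exact: cvg_harmonic.
have -> : (fun n => gfun W rho n.+1) =
  (fun n => (W * (2 + h n) / 3 + rho * h n + h n * h n) * (W + 2 * rho * h n + h n * h n)^-1).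
  apply: funext => n; rewrite /gfun /h.
  have hN : (n.+1%:R : R) != 0 by rewrite pnatr_eq0.
  set N := n.+1%:R.
  have -> : W * (2 + N^-1) / 3 + rho * N^-1 + N^-1 * N^-1 =
     (W * N * (2 * N + 1) / 3 + rho * N + 1) / N ^+ 2 by field; rewrite ?pnatr_eq0.
  have -> : W + 2 * rho * N^-1 + N^-1 * N^-1 = (1 + 2 * rho * N + W * N ^+ 2) / N ^+ 2 by field.
  have [D0|D0] := eqVneq (1 + 2 * rho * N + W * N ^+ 2) 0.
    by rewrite D0 !mul0r invr0 !mulr0.
  have e : 1 + n%:R = N by rewrite /N mulrS.
  by field; rewrite e hN D0.
have -> : (2 / 3 : R) = (W * (2 + 0) / 3 + rho * 0 + 0 * 0) * (W + 2 * rho * 0 + 0 * 0)^-1.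
  by field; rewrite ?pnatr_eq0.
apply: cvgM.
  apply: cvgD; first apply: cvgD.
  - by apply: cvgM; [apply: cvgM; [exact: cvg_cst | apply: cvgD; [exact: cvg_cst | exact: h0]] | exact: cvg_cst].
  - by apply: cvgM; [exact: cvg_cst | exact: h0].
  - by apply: cvgM; exact: h0.
apply: cvgV; first by rewrite !mulr0 !addr0.
apply: cvgD; first apply: cvgD.
- exact: cvg_cst.
- by apply: cvgM; [exact: cvg_cst | exact: h0].
- by apply: cvgM; exact: h0.
Qed.
End Lim.
Section Main.
Variable R : realType.
Local Notation C := (R[i]).

Lemma event_ne0 (z w : C) : w != 0 -> exists N0, forall n, (N0 <= n)%N -> z + n%:R * w != 0.
Proof.
move=> hw.
have [[n1 hn1]|hno] := pselect (exists n1 : nat, z + n1%:R * w = 0).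
  exists n1.+1 => n hn; apply/eqP => hn0.
  have : (n%:R - n1%:R) * w = 0.
    have -> : (n%:R - n1%:R) * w = (z + n%:R * w) - (z + n1%:R * w) by ring.
    by rewrite hn0 hn1 subrr.
  move/eqP; rewrite mulf_eq0 (negbTE hw) orbF subr_eq0 eqr_nat => /eqP e.
  by move: hn; rewrite e ltnn.
exists 0%N => n _; apply/eqP => h; apply: hno; by exists n.
Qed.

Lemma norm1_of (u : C) : u * u^* = 1 -> `|u| = 1.
Proof. by move=> h; apply/eqP; rewrite -(@sqrp_eq1 _ `|u|) // normCK h. Qed.

Lemma inv_conj (u : C) : u * u^* = 1 -> u^* = u^-1.
Proof.
move=> h; have hu : u != 0 by apply/negP => /eqP e; move: h; rewrite e mul0r => /eqP; rewrite eq_sym oner_eq0.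
by rewrite -[u^*]mul1r -(mulVf hu) -mulrA h mulr1.
Qed.

End Main.

Unset Implicit Arguments.

Theorem mainTheorem8 (R : realType) (U : 'M[R[i]]_2) (s omega : R[i]) :
  unitary2 U ->
  s ^+ 2 = \det U ->
  U 0 0 * U 0 1 * U 1 0 * U 1 1 != 0 ->
  `|omega| = 1 ->
  `|xfun U omega| = 1 ->
  (fun M : nat => energy U s omega M / M%:R : R) @ \oo --> (2 / 3 : R).
Proof.
move=> hU hs habcd hom hx.
have [hd hc hD] := unitary_facts hU.
move: habcd; rewrite !mulf_eq0 !negb_or => /andP[/andP[/andP[ha hb] hc0] hd0].
set a := U 0 0 in ha hd hc hx *; set b := U 0 1 in hb hc *; set c := U 1 0 in hc0 hc *; set d := U 1 1 in hd0 hd *.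
set D := \det U in hs hd hc hD.
have hD0 : D != 0 by apply/negP => /eqP e; move: hD; rewrite e mul0r => /eqP; rewrite eq_sym oner_eq0.
have hs0 : s != 0 by apply/negP => /eqP e; move: hs; rewrite e expr0n /= => e'; move: hD0; rewrite -e' eqxx.
have hoo : omega * omega^* = 1 by rewrite -normCK hom expr1n.
have ho0 : omega != 0 by rewrite -normr_eq0 hom oner_eq0.
have hoc := inv_conj hoo.
have hna : `|a| != 0 by rewrite normr_eq0.
have hxc : (xfun U omega)^* = xfun U omega.
  rewrite /xfun fmorph_div rmorphD fmorphV /=.
  rewrite (_ : omega^* = omega^-1); last exact: hoc.
  rewrite invrK.
  rewrite (geC0_conj (x := 2 * `|U 0 0|)) ?mulr_ge0 ?normr_ge0 //.
  by rewrite -/a addrC.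
have hx2 : (omega + omega^-1) ^+ 2 = 4 * (a * a^*).
  have : xfun U omega ^+ 2 = 1 by rewrite expr2 -{2}hxc -normCK hx expr1n.
  rewrite /xfun expr_div_n -/a => /(congr1 (fun t => t * (2 * `|a|) ^+ 2)).
  rewrite divfK ?mul1r; last by rewrite expf_neq0 // mulf_neq0 // pnatr_eq0.
  by move=> ->; rewrite exprMn normCK; ring.
have hdet : D = a * d - b * c by rewrite /D det22.
pose z := s * omega.
have hz0 : z != 0 by rewrite mulf_neq0.
pose lam := (z ^+ 2 + D) / (2 * a * z).
pose w := z - lam * a.
have hac : a^* = (omega + omega^-1) ^+ 2 / (4 * a).
  by rewrite hx2; field.
have hF1 : d = lam ^+ 2 * a.
  rewrite hd hac /lam /z -hs; field.
  by rewrite ha hs0 ho0.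
have hcb : c * b = w ^+ 2.
  have -> : c * b = a * d - D by rewrite hdet; ring.
  rewrite hF1 /w /lam /z -hs; field.
  by rewrite ha hs0 ho0.
have hnD : `|D| = 1 := norm1_of hD.
have hnl : `|lam| = 1.
  have h1 : `|lam| ^+ 2 * `|a| = 1 * `|a|.
    by rewrite -normrX -normrM -hF1 hd normrM hnD !mul1r norm_conjC.
  by apply/eqP; rewrite -(@sqrp_eq1 _ `|lam|) // (mulIf hna h1).
have hl0 : lam != 0 by rewrite -normr_eq0 hnl oner_eq0.
have hnz : `|z| = 1.
  have : `|s| ^+ 2 = 1 by rewrite -normrX hs hnD.
  move/eqP; rewrite sqrp_eq1 // => /eqP hns.
  by rewrite /z normrM hns hom mulr1.
have hnb : `|b| = `|w|.
  have h2 : `|w| ^+ 2 = `|b| ^+ 2.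
    by rewrite -normrX -hcb normrM hc normrN normrM hnD mul1r norm_conjC expr2.
  by apply/eqP; rewrite -(@eqrXn2 _ 2) // h2.
have hw0 : w != 0.
  have : w ^+ 2 != 0 by rewrite -hcb mulf_neq0.
  by apply: contra => /eqP ->; rewrite expr0n.
pose W := complex.Re (w * w^*).
pose rho := complex.Re (z * w^*).
have hW : (W%:C)%C = w * w^* by rewrite RRe_real // ger0_real // mul_conjC_ge0.
have hrho : (rho%:C)%C = 'Re (z * w^*) by rewrite complexRe.
have W0 : 0 < W by rewrite -ltcR hW -normCK exprn_gt0 // normr_gt0.
have [N0 hN0] := event_ne0 z hw0.
rewrite -cvg_shiftS -cvg_shiftS /=.
apply: (cvg_trans _ (lim_g rho W0)).
apply: near_eq_cvg.
apply: filterS (nbhs_infty_ge N0) => n hn /=.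
have hE : z + n.+1%:R * w != 0 by apply: hN0; lia.
rewrite (@energy_eq R U s omega lam w n.+1 W rho erefl hF1 hcb hl0 hb ha hE hnl hnz hnb hW hrho).
rewrite /Gt -mulr_suml sum_closed /gfun.
set den := (1 + 2 * rho * n.+1%:R + W * n.+1%:R ^+ 2).
have [D0|D0] := eqVneq den 0.
  by rewrite D0 !invr0 !mulr0 mul0r.
field; rewrite D0 andbT.
by rewrite -natrD pnatr_eq0.
Qed.
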